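(* Let $\varphi\colon\mathcal{A}\to\mathcal{A}^*$ be a substitution of constant length and let $\pi\colon X_\varphi\to Y$ be a factor map onto some subshift $Y$. Then there is a constant $K$ such that $|\pi^{-1}(y)|\leq K$ for every nonperiodic $y\in Y$.
   Context: Substitutions are growing, of constant length $k\ge 2$ here ($|\varphi(a)|=k$ for all $a$), acting on $\mathcal{A}^{\mathbf{Z}}$ by concatenation. $T$ is the shift $(Tx)_n=x_{n+1}$. $X_\varphi=\{x\in\mathcal{A}^{\mathbf{Z}}:$ every finite factor of $x$ appears in $\varphi^n(a)$ for some $a$, $n\geq0\}$. A subshift is a closed shift-invariant subset of $\mathcal{B}^{\mathbf{Z}}$; a factor map is a continuous surjection commuting with the shifts. $y$ is periodic if $T^py=y$ for some $p\geq1$. *)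

(* Defs.v *)
From mathcomp Require Import all_boot all_order all_algebra.
Set Implicit Arguments. Unset Strict Implicit. Unset Printing Implicit Defensive.
Import Order.TTheory GRing.Theory Num.Theory.
Local Open Scope ring_scope.

Definition biseq (A : Type) := int -> A.

Definition shift (A : Type) (x : biseq A) : biseq A := fun n => x (n + 1).
Definition shiftinv (A : Type) (x : biseq A) : biseq A := fun n => x (n - 1).

Definition subst_word (A : Type) (phi : A -> seq A) (w : seq A) : seq A :=
  flatten (map phi w).
Definition subst_iter (A : Type) (phi : A -> seq A) (n : nat) (a : A) : seq A :=
  iter n (subst_word phi) [:: a].

Definition const_length_subst (A : Type) (phi : A -> seq A) (k : nat) : Prop :=
  (2 <= k)%N /\ forall a, size (phi a) = k.

Definition window (A : Type) (x : biseq A) (i : int) (n : nat) : seq A :=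
  [seq x (i + j%:Z) | j <- iota 0 n].

Definition Xsub (A : eqType) (phi : A -> seq A) (x : biseq A) : Prop :=
  forall (i : int) (n : nat), exists (a : A) (m : nat),
    infix (window x i n) (subst_iter phi m a).

Definition agree (A : Type) (n : nat) (x y : biseq A) : Prop :=
  forall i : int, (`|i|%N <= n)%N -> x i = y i.

(* Subshift: closed (in the product topology) and shift-invariant. *)
Definition subshift (B : Type) (Y : biseq B -> Prop) : Prop :=
  (forall y, Y y -> Y (shift y)) /\
  (forall y, Y y -> Y (shiftinv y)) /\
  (forall y, (forall n, exists y', Y y' /\ agree n y y') -> Y y).

(* Factor map pi : X -> Y: continuous (product topology), surjective,
   commuting with the shifts. pi is a total function, constrained only on X. *)
Definition factor_map (A B : Type) (X : biseq A -> Prop) (Y : biseq B -> Prop)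
  (pi : biseq A -> biseq B) : Prop :=
  (forall x, X x -> Y (pi x)) /\
  (forall y, Y y -> exists x, X x /\ pi x = y) /\
  (forall x, X x -> pi (shift x) = shift (pi x)) /\
  (forall x, X x -> forall n : nat, exists m : nat,
      forall x', X x' -> agree m x x' -> agree n (pi x) (pi x')).

Definition periodic (B : Type) (y : biseq B) : Prop :=
  exists p : nat, (1 <= p)%N /\ iter p (@shift B) y = y.

(* Main.v *)
Require Import Defs.
From Stdlib Require Import ClassicalEpsilon Classical FunctionalExtensionality.
From mathcomp Require Import all_boot all_order all_algebra.
From mathcomp Require Import zify.
Import Order.TTheory GRing.Theory Num.Theory.

Section Words.
Variable A : eqType.
Variable phi : A -> seq A.
Variable k : nat.
Hypothesis hk : forall a, size (phi a) = k.

Lemma sw_cat u v : subst_word phi (u ++ v) = subst_word phi u ++ subst_word phi v.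
Proof. by rewrite /subst_word map_cat flatten_cat. Qed.

Lemma size_sw u : size (subst_word phi u) = k * size u.
Proof.
elim: u => [|a u IH]; first by rewrite /subst_word /= muln0.
by rewrite -cat1s sw_cat size_cat IH /subst_word /= cats0 hk mulnS.
Qed.

Lemma iter_cat j u v : iter j (subst_word phi) (u ++ v) =
  iter j (subst_word phi) u ++ iter j (subst_word phi) v.
Proof. by elim: j => [|j IHj] //=; rewrite IHj sw_cat. Qed.

Lemma iter_sw j s : iter j (subst_word phi) s = flatten (map (subst_iter phi j) s).
Proof.
elim: s => [|a s IH].
  by elim: j => //= j ->.
by rewrite /= -IH -cat1s iter_cat.
Qed.

Lemma size_iter j a : size (subst_iter phi j a) = k ^ j.
Proof.
rewrite /subst_iter; elim: j => [|j IH] //=.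
by rewrite size_sw IH expnS.
Qed.

Lemma iter_split m j a : j <= m ->
  subst_iter phi m a = flatten (map (subst_iter phi j) (subst_iter phi (m - j) a)).
Proof.
move=> hjm; rewrite -iter_sw /subst_iter -iterD subnKC //.
Qed.
End Words.

Lemma take_drop_prefix (T : Type) L off (u v : seq T) : off + L <= size u ->
  take L (drop off (u ++ v)) = take L (drop off u).
Proof.
move=> h; case: L h => [|L] h; first by rewrite !take0.
rewrite drop_cat ifT; last by lia.
by rewrite takel_cat // size_drop; lia.
Qed.

Lemma block_infix (A : eqType) (g : A -> seq A) K' (hg : forall b, size (g b) = K')
  (s : seq A) (w : seq A) : infix w (flatten (map g s)) -> size w <= K' -> 0 < size w ->
  exists b c off, off < K' /\ w = take (size w) (drop off (g b ++ g c)).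
Proof.
elim: s => [|b s IH].
  by move=> /infixP [p [q]] /(f_equal size); rewrite !size_cat /=; lia.
move=> /infixP [p [q e]] hw hw0; rewrite /= in e.
case: (ltnP (size p) K') => hp.
  have ew : w = take (size w) (drop (size p) (g b ++ flatten (map g s))).
    by rewrite e drop_size_cat // take_size_cat.
  move: e ew; case: s IH => [|c s] IH /=; rewrite ?cats0.
    move=> e ew.
    have hs : size p + size w <= size (g b) by rewrite e !size_cat; lia.
    exists b, b, (size p); split => //.
    by rewrite {1}ew take_drop_prefix.
  move=> e ew.
  have hs : size p + size w <= size (g b ++ g c) by rewrite size_cat !hg; lia.
  exists b, c, (size p); split => //.
  by rewrite {1}ew catA take_drop_prefix.
apply: IH => //; apply/infixP; exists (drop K' p), q.
have := f_equal (drop K') e.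
rewrite -{1}(cat_take_drop K' p) -catA drop_size_cat ?(hg b) //.
rewrite drop_size_cat // size_take; case: ltnP => //; lia.
Qed.

Lemma lang_bound (A : finType) (phi : A -> seq A) k (hk2 : 2 <= k)
  (hk : forall a, size (phi a) = k) L (hL : 0 < L) :
  exists N, N <= k * L /\ exists g : (A * A * 'I_N) -> seq A,
    forall w a m, size w = L -> infix w (subst_iter phi m a) -> w \in codom g.
Proof.
have exP : exists j, L <= k ^ j.
  by exists L; apply: ltnW; apply: ltn_expl; lia.
case: (ex_minnP exP) => j hj hmin.
exists (k ^ j); split.
  case: j hj hmin => [|j] hj hmin; first by rewrite expn0; lia.
  have : ~~ (L <= k ^ j) by apply/negP => /hmin; lia.
  rewrite -ltnNge expnS => h; rewrite leq_mul2l (ltnW h) orbT //.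
exists (fun p => take L (drop (val p.2) (subst_iter phi j p.1.1 ++ subst_iter phi j p.1.2))).
move=> w a m hw hinf.
case: (ltnP m j) => hmj.
  have := size_infix hinf; rewrite (@size_iter _ _ _ hk) hw => h.
  have := hmin m h; lia.
rewrite (@iter_split _ phi _ _ a hmj) in hinf.
have [b [c [off [hoff ew]]]] := @block_infix _ _ _ (@size_iter _ _ _ hk j) _ _ hinf (leq_trans (eq_leq hw) hj) (ltac:(by rewrite hw)).
have hoff' : off < k ^ j by [].
apply/codomP; exists ((b, c), Ordinal hoff') => /=.
by rewrite -{1}hw.
Qed.

Set Implicit Arguments. Unset Strict Implicit.

Definition agr (A : Type) (m : nat) (x y : biseq A) : Prop :=
  forall i : int, (`|i| < m)%N -> x i = y i.

Lemma agreeE (A : Type) n (x y : biseq A) : agree n x y <-> agr n.+1 x y.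
Proof. by split => h i hi; apply: h. Qed.

Lemma agr_sym (A : Type) m (x y : biseq A) : agr m x y -> agr m y x.
Proof. by move=> h i hi; rewrite h. Qed.

Lemma agr_trans (A : Type) m (x y z : biseq A) : agr m x y -> agr m y z -> agr m x z.
Proof. by move=> h1 h2 i hi; rewrite h1 // h2. Qed.

Lemma agr_le (A : Type) m m' (x y : biseq A) : (m <= m')%N -> agr m' x y -> agr m x y.
Proof. by move=> hm h i hi; apply: h; lia. Qed.

Lemma pigeon_inf (T : finType) (f : nat -> T) (Q : nat -> Prop) :
  (forall N, exists j, (N <= j)%N /\ Q j) ->
  exists v, forall N, exists j, (N <= j)%N /\ Q j /\ f j = v.
Proof.
move=> hQ; apply: NNPP => hn.
have hs : forall s : seq T, exists N, forall v, v \in s -> forall j, (N <= j)%N -> Q j -> f j <> v.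
  elim=> [|v s [N HN]]; first by exists 0.
  have [N' HN'] : exists N', forall j, (N' <= j)%N -> Q j -> f j <> v.
    apply: NNPP => h; apply: hn; exists v => N0.
    apply: NNPP => h2; apply: h; exists N0 => j hj hQj hfj; apply: h2; by exists j.
  exists (maxn N N') => w; rewrite inE => /orP [/eqP -> | hw] j hj.
    by apply: HN'; lia.
  by apply: HN => //; lia.
have [N HN] := hs (enum T).
have [j [hj hQj]] := hQ N.
apply: (HN (f j) _ j hj hQj) => //; by rewrite enumT mem_index_enum.
Qed.

Section Compact.
Variable A : finType.
Variable xs : nat -> biseq A.

Definition Inf m (x : biseq A) := forall N, exists j, (N <= j)%N /\ agr m x (xs j).

Lemma step m x0 : Inf m x0 -> exists x, agr m x x0 /\ Inf m.+1 x /\ exists j, x = xs j.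
Proof.
move=> hI.
pose f j := [ffun u : 'I_(m.*2.+1) => xs j (u%:Z - m%:Z)%R].
have [v hv] := pigeon_inf f hI.
have [j0 [_ [hQ0 hf0]]] := hv 0%N.
exists (xs j0); split; first exact: agr_sym.
split; last by exists j0.
move=> N; have [j [hj [_ hfj]]] := hv N.
exists j; split => // i hi.
have hu : (absz (i + m%:Z)%R < m.*2.+1)%N by lia.
have := congr1 (fun g : {ffun _} => g (Ordinal hu)) (etrans hfj (esym hf0)).
rewrite /f !ffunE /=.
have -> : ((absz (i + m%:Z)%R)%:Z - m%:Z)%R = i by lia.
by [].
Qed.

Lemma cluster (X : biseq A -> Prop) :
  (forall x, (forall n, exists x', X x' /\ agree n x x') -> X x) ->
  (forall j, X (xs j)) ->
  exists x, X x /\ forall m N, exists j, (N <= j)%N /\ agr m x (xs j).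
Proof.
move=> hcl hX.
have inh : inhabited (biseq A) by constructor; exact: xs 0%N.
pose S m x0 := epsilon inh (fun x => agr m x x0 /\ Inf m.+1 x /\ exists j, x = xs j).
pose z := fix z m := if m is m'.+1 then S m' (z m') else xs 0%N.
have hz : forall m, Inf m (z m) /\ exists j, z m = xs j.
  elim=> [|m [hI _]].
    split; last by exists 0%N.
    by move=> N; exists N; split => // i; rewrite ltn0.
  have := epsilon_spec inh (fun x => agr m x (z m) /\ Inf m.+1 x /\ exists j, x = xs j) (step hI).
  by move=> [_ [h1 h2]]; split.
have hzs : forall m, agr m (z m.+1) (z m).
  move=> m; have [hI _] := hz m.
  have := epsilon_spec inh (fun x => agr m x (z m) /\ Inf m.+1 x /\ exists j, x = xs j) (step hI).
  by move=> [h _].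
have chain : forall a b, (a <= b)%N -> agr a (z b) (z a).
  move=> a; elim=> [|b IH] hab.
    have -> : a = 0%N by lia.
    by move=> i; rewrite ltn0.
  case: (ltnP b a) => hba.
    have -> : a = b.+1 by lia.
    by move=> i.
  apply: agr_trans (IH hba); apply: agr_le (hzs b); lia.
pose xi : biseq A := fun i => z (`|i|%N.+1) i.
have hxi : forall m, agr m xi (z m).
  move=> m i hi; rewrite /xi.
  by rewrite (chain (`|i|%N.+1) m hi i) //.
exists xi; split.
  apply: hcl => n; exists (z n.+1); split.
    by have [_ [j ->]] := hz n.+1.
  by apply/agreeE.
move=> m N; have [hI _] := hz m.
have [j [hj hj2]] := hI N.
exists j; split => //; exact: agr_trans (hxi m) hj2.
Qed.
End Compact.

Lemma window_ext (A : Type) (x x' : biseq A) i n :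
  (forall u, (u < n)%N -> x (i + u%:Z)%R = x' (i + u%:Z)%R) -> window x i n = window x' i n.
Proof.
move=> h; apply/eq_in_map => u; rewrite mem_iota add0n => hu; exact: h.
Qed.

Lemma Xsub_closed (A : eqType) (phi : A -> seq A) x :
  (forall n, exists x', Xsub phi x' /\ agree n x x') -> Xsub phi x.
Proof.
move=> h i n.
have [x' [hx' hag]] := h (`|i| + n)%N.
rewrite (@window_ext _ x x'); first exact: hx'.
move=> u hu; apply: hag; lia.
Qed.

Lemma unif (A : finType) (B : Type) (X : biseq A -> Prop) (pi : biseq A -> biseq B) :
  (forall x, (forall n, exists x', X x' /\ agree n x x') -> X x) ->
  (forall x, X x -> forall n : nat, exists m : nat,
      forall x', X x' -> agree m x x' -> agree n (pi x) (pi x')) ->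
  exists r, forall x x', X x -> X x' -> agree r x x' -> pi x 0%R = pi x' 0%R.
Proof.
move=> hcl hco; apply: NNPP => hn.
have hb : forall r, exists p : biseq A * biseq A,
    X p.1 /\ X p.2 /\ agree r p.1 p.2 /\ pi p.1 0%R <> pi p.2 0%R.
  move=> r; apply: NNPP => h2; apply: hn; exists r => x x' hx hx' ha.
  apply: NNPP => h3; apply: h2; by exists (x, x').
have inh : inhabited (biseq A * biseq A).
  have [p _] := hb 0%N; by constructor.
pose P r := fun p : biseq A * biseq A =>
    X p.1 /\ X p.2 /\ agree r p.1 p.2 /\ pi p.1 0%R <> pi p.2 0%R.
pose pr r := epsilon inh (P r).
have hpr : forall r, P r (pr r) := fun r => epsilon_spec inh (P r) (hb r).
have [xi [hxi hcl2]] := @cluster _ (fun j => (pr j).1) X hcl (fun j => (proj1 (hpr j))).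
have [m0 hm0] := hco xi hxi 0%N.
have [j [hj hag]] := hcl2 m0.+1 m0.
have [h1 [h2 [h3 h4]]] := hpr j.
apply: h4.
have e1 := hm0 _ h1 (proj2 (agreeE _ _ _) hag).
have e2 : agree m0 xi (pr j).2.
  apply/agreeE; apply: agr_trans hag _.
  apply: (@agr_le _ _ j.+1); first by lia.
  exact/agreeE.
have e3 := hm0 _ h2 e2.
by rewrite -(e1 0%R) // -(e3 0%R).
Qed.

Definition shz (A : Type) (t : int) (x : biseq A) : biseq A := fun n => x (n + t)%R.

Lemma Xsub_shz (A : eqType) (phi : A -> seq A) t x : Xsub phi x -> Xsub phi (shz t x).
Proof.
move=> h i n; have [a [m hm]] := h (i + t)%R n.
exists a, m; rewrite /window /shz.
suff -> : [seq x ((i + j%:Z) + t)%R | j <- iota 0 n] = [seq x ((i + t) + j%:Z)%R | j <- iota 0 n] by [].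
by apply: eq_map => u; congr x; lia.
Qed.

Lemma shz_shift_S (A : Type) (m : nat) (x : biseq A) : shz (m.+1)%:Z x = shift (shz m%:Z x).
Proof. apply: functional_extensionality => n; rewrite /shz /shift; congr x; lia. Qed.

Lemma shz_shz (A : Type) t t' (x : biseq A) : shz t (shz t' x) = shz (t + t')%R x.
Proof. apply: functional_extensionality => n; rewrite /shz; congr x; lia. Qed.

Lemma shz0 (A : Type) (x : biseq A) : shz 0%R x = x.
Proof. apply: functional_extensionality => n; rewrite /shz; congr x; lia. Qed.

Lemma pi_shz (A B : Type) (X : biseq A -> Prop) (pi : biseq A -> biseq B) :
  (forall x t, X x -> X (shz t x)) ->
  (forall x, X x -> pi (shift x) = shift (pi x)) ->
  forall t x, X x -> pi (shz t x) = shz t (pi x).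
Proof.
move=> hX hsh.
have hpos : forall (m : nat) x, X x -> pi (shz m%:Z x) = shz m%:Z (pi x).
  move=> m x hx; elim: m => [|m IH]; first by rewrite !shz0.
  by rewrite !shz_shift_S hsh ?IH //; apply: hX.
move=> [m|m] x hx; first exact: hpos.
set w := shz (Negz m) x.
have hw : x = shz (m.+1)%:Z w.
  rewrite /w shz_shz; have -> : ((m.+1)%:Z + Negz m)%R = 0%R by lia.
  by rewrite shz0.
rewrite {1}hw hpos /w ?shz_shz; last exact: hX.
have -> : (Negz m + (m.+1)%:Z)%R = 0%R by lia.
by rewrite shz0.
Qed.

Section Per.
Variable B : Type.
Variable y : biseq B.
Local Open Scope ring_scope.

Definition per (p : nat) (a b : int) :=
  forall n : int, (a <= n)%R -> (n + p%:Z < b)%R -> y n = y (n + p%:Z)%R.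

Lemma per_mult q a b : per q a b -> forall c : nat, forall m : int,
  (a <= m)%R -> (m + (c * q)%N%:Z < b)%R -> y m = y (m + (c * q)%N%:Z)%R.
Proof.
move=> hp; elim=> [|c IH] m ha hb.
  by rewrite mul0n addr0.
rewrite (IH m) //; last by lia.
rewrite hp; last by lia. 2: lia.
congr y; lia.
Qed.

Lemma combine q p a b a' b' : per q a b -> per p a' b' -> (a <= a')%R -> (b' <= b)%R ->
  (a' + q%:Z + p%:Z <= b')%R -> (0 < q)%N -> per p a b.
Proof.
move=> hq hp haa hbb hlen hq0 n han hnb.
have hqz : (q%:Z != 0)%R by lia.
have e := divz_eq (n - a')%R q%:Z.
have h1 := modz_ge0 (n - a')%R hqz.
have h2 := @ltz_pmod (n - a')%R q%:Z (ltac:(lia)).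
set c := ((n - a') %/ q%:Z)%Z in e.
set r := ((n - a') %% q%:Z)%Z in e h1 h2.
set n' := (a' + r)%R.
have hn' : y n' = y (n' + p%:Z)%R by apply: hp; lia.
case: c e => [c|c] e.
- have ecq : (c%:Z * q%:Z)%R = (c * q)%N%:Z by lia.
  rewrite ecq in e.
  have E1 : y n' = y (n' + (c * q)%N%:Z)%R by apply: (per_mult hq); lia.
  have E2 : y (n' + p%:Z)%R = y ((n' + p%:Z) + (c * q)%N%:Z)%R by apply: (per_mult hq); lia.
  have -> : n = (n' + (c * q)%N%:Z)%R by lia.
  rewrite -E1 hn' E2; congr y; lia.
- have ecq : (Negz c * q%:Z)%R = - ((c.+1 * q)%N%:Z)%R by rewrite NegzE; lia.
  rewrite ecq in e.
  have E1 : y n = y (n + (c.+1 * q)%N%:Z)%R by apply: (per_mult hq); lia.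
  have E2 : y (n + p%:Z)%R = y ((n + p%:Z) + (c.+1 * q)%N%:Z)%R by apply: (per_mult hq); lia.
  rewrite E1 E2.
  have -> : (n + (c.+1 * q)%N%:Z)%R = n' by lia.
  rewrite hn'; congr y; lia.
Qed.

Definition Good (H : nat) := forall t t' : int,
  (- (2 * H)%N%:Z <= t)%R -> (t < - H%:Z)%R ->
  (- (2 * H)%N%:Z <= t')%R -> (t' < - H%:Z)%R ->
  (forall u : nat, (u < 4 * H)%N -> y (t + u%:Z)%R = y (t' + u%:Z)%R) -> t = t'.

Lemma notgood H : ~ Good H -> exists p : nat, (0 < p < H)%N /\ per p (- H%:Z) (2 * H)%N%:Z.
Proof.
move=> hn.
have [t [t' [[h1 h2 h3 h4] [h5 h6]]]] : exists t t' : int,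
  [/\ (- (2 * H)%N%:Z <= t)%R, (t < - H%:Z)%R, (- (2 * H)%N%:Z <= t')%R & (t' < - H%:Z)%R] /\
  (forall u : nat, (u < 4 * H)%N -> y (t + u%:Z)%R = y (t' + u%:Z)%R) /\ (t < t')%R.
  apply: NNPP => hc; apply: hn => t t' a1 a2 a3 a4 a5.
  case: (ltgtP t t') => // hlt.
  - exfalso; apply: hc; exists t, t'; split => //.
  - exfalso; apply: hc; exists t', t; split => //; split => // u hu; by rewrite a5.
exists (absz (t' - t)); split; first by lia.
move=> n hn1 hn2.
have hu : (absz (n - t) < 4 * H)%N by lia.
have := h5 _ hu.
have -> : t + (absz (n - t))%:Z = n by lia.
move=> ->; congr y; lia.
Qed.

Lemma iter_shift (p : nat) : iter p (@shift B) y = fun n => y (n + p%:Z).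
Proof.
elim: p => [|p IH] /=.
  by apply: functional_extensionality => n; rewrite addr0.
rewrite IH; apply: functional_extensionality => n; rewrite /shift; congr y; lia.
Qed.

Lemma good_exists : ~ periodic y -> forall H0 : nat, (0 < H0)%N ->
  exists j : nat, Good (2 ^ j * H0)%N.
Proof.
move=> hnp H0 hH0; apply: NNPP => hn.
have hng : forall j, ~ Good (2 ^ j * H0)%N by move=> j hg; apply: hn; exists j.
have [p0 [hp0 hper0]] := notgood (hng 0%N).
have hHS : forall j, (2 ^ j.+1 * H0 = 2 * (2 ^ j * H0))%N by move=> j; rewrite expnS mulnA.
have hH0j : forall j, (H0 <= 2 ^ j * H0)%N.
  by move=> j; rewrite leq_pmull // expn_gt0.
have hall : forall j, per p0 (- (2 ^ j * H0)%N%:Z) (2 * (2 ^ j * H0))%N%:Z.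
  elim=> [|j IH]; first by rewrite expn0 mul1n in hper0 *.
  have [q [hq hperq]] := notgood (hng j.+1).
  have hj := hH0j j.
  rewrite hHS in hq hperq *.
  apply: (combine hperq IH); lia.
apply: hnp; exists p0; split; first by lia.
rewrite iter_shift; apply: functional_extensionality => n.
set j := (absz n + p0)%N.
have hj : (j < 2 ^ j)%N by apply: ltn_expl.
have hj2 := hH0j j.
have hj3 : (j < 2 ^ j * H0)%N by rewrite (leq_trans hj) // leq_pmulr.
symmetry; apply: (hall j); lia.
Qed.
End Per.

Lemma window_nth (A : Type) (d : A) (x : biseq A) s n v : (v < n)%N ->
  nth d (window x s n) v = x (s + v%:Z)%R.
Proof.
move=> hv; rewrite /window (nth_map 0%N) ?size_iota // nth_iota //.
Qed.

Lemma fin_bound (T : finType) (Q : T -> nat -> Prop) :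
  (forall t, exists D, Q t D) -> (forall t D D', (D <= D')%N -> Q t D -> Q t D') ->
  exists D, forall t, Q t D.
Proof.
move=> hQ hmono.
have hs : forall s : seq T, exists D, forall t, t \in s -> Q t D.
  elim=> [|t s [D HD]]; first by exists 0%N.
  have [D' HD'] := hQ t.
  exists (maxn D D') => t'; rewrite inE => /orP [/eqP -> | ht].
    by apply: (hmono _ D'); first exact: leq_maxr.
  by apply: (hmono _ D); [exact: leq_maxl | exact: HD].
have [D HD] := hs (enum T).
by exists D => t; apply: HD; rewrite enumT mem_index_enum.
Qed.

Unset Implicit Arguments.

Theorem lemma1p15 (A B : finType) (phi : A -> seq A) (k : nat)
  (Y : biseq B -> Prop) (pi : biseq A -> biseq B) :
  const_length_subst phi k ->
  subshift Y ->
  factor_map (Xsub phi) Y pi ->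
  exists K : nat, forall y : biseq B, Y y -> ~ periodic y ->
    forall f : 'I_K.+1 -> biseq A,
      (forall i, Xsub phi (f i) /\ pi (f i) = y) ->
      exists i j : 'I_K.+1, i != j /\ f i = f j.
Proof.
move=> [hk2 hk] _ [hXY [hsurj [hsh hco]]].
have [r hr] := @unif A B (Xsub phi) pi (@Xsub_closed _ phi) hco.
have hloc : forall x x' (n n' : int), Xsub phi x -> Xsub phi x' ->
    (forall w : int, (`|w| <= r)%N -> x (n + w)%R = x' (n' + w)%R) -> pi x n = pi x' n'.
  move=> x x' n n' hx hx' hw.
  have e1 : pi x n = pi (shz n x) 0%R.
    by rewrite (pi_shz (fun x t => @Xsub_shz _ phi t x) hsh) // /shz add0r.
  have e2 : pi x' n' = pi (shz n' x') 0%R.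
    by rewrite (pi_shz (fun x t => @Xsub_shz _ phi t x) hsh) // /shz add0r.
  rewrite e1 e2; apply: hr; try exact: Xsub_shz.
  move=> i hi; rewrite /shz addrC hw // addrC //.
exists (#|A| * #|A| * k * 5)%N.
set K := (#|A| * #|A| * k * 5)%N.
move=> y hy hnp f hf.
apply: NNPP => hne.
have hD : exists D : nat, forall p : 'I_K.+1 * 'I_K.+1,
    p.1 != p.2 -> exists d : int, (`|d| <= D)%N /\ f p.1 d <> f p.2 d.
  apply: fin_bound.
    move=> [i j] /=; case: (boolP (i != j)) => hij; last by exists 0%N.
    have hfij : f i <> f j by move=> e; apply: hne; exists i, j.
    have [d hd] : exists d, f i d <> f j d.
      apply: NNPP => h; apply: hfij; apply: functional_extensionality => d.
      by apply: NNPP => h2; apply: h; exists d.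
    by exists (`|d|)%N => _; exists d.
  move=> [i j] D D' hDD h /= hij; have [d [hd1 hd2]] := h hij.
  by exists d; split => //; lia.
have [D HD] := hD.
set E := (D + r)%N.
have hE : E = (D + r)%N by [].
have [jj hgood] := good_exists hnp (ltn0Sn (2 * E)).
set H := (2 ^ jj * (2 * E).+1)%N in hgood.
have hH : (2 * E < H)%N.
  by rewrite /H (@leq_trans (2 * E).+1) // leq_pmull // expn_gt0.
set L := (4 * H + 2 * E)%N.
have hLd : L = (4 * H + 2 * E)%N by [].
have [N [hN [g hg]]] := @lang_bound A phi k hk2 hk L (ltac:(lia)).
pose W (p : 'I_K.+1 * 'I_H) := window (f p.1) ((- (2 * H)%N%:Z + (nat_of_ord p.2)%:Z) - E%:Z)%R L.
have Winj : injective W.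
  move=> [i u] [i' u'] /= eW.
  have hu := ltn_ord u; have hu' := ltn_ord u'.
  have hyw : forall v : nat, (v < 4 * H)%N ->
      y (- (2 * H)%N%:Z + (nat_of_ord u)%:Z + v%:Z)%R = y (- (2 * H)%N%:Z + (nat_of_ord u')%:Z + v%:Z)%R.
    move=> v hv; have [hfi1 hfi2] := hf i; have [hfi1' hfi2'] := hf i'.
    rewrite -{1}hfi2 -hfi2'; apply: hloc => // w hw.
    set vv := absz (v%:Z + E%:Z + w)%R.
    have hvv : (vv < L)%N by rewrite /vv; lia.
    have e := congr1 (fun s => nth (f i 0%R) s vv) eW.
    rewrite /= !window_nth // /= in e.
    have -> : (- (2 * H)%N%:Z + (nat_of_ord u)%:Z + v%:Z + w)%R =
        ((- (2 * H)%N%:Z + (nat_of_ord u)%:Z - E%:Z) + vv%:Z)%R by rewrite /vv; lia.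
    rewrite e; congr (f i'); rewrite /vv; lia.
  have htt : (- (2 * H)%N%:Z + (nat_of_ord u)%:Z)%R = (- (2 * H)%N%:Z + (nat_of_ord u')%:Z)%R.
    by apply: hgood => //; lia.
  have huu : u = u' by apply: val_inj => /=; lia.
  subst u'.
  have hii : i = i'.
    apply: NNPP => hneq.
    have [d [hd1 hd2]] := HD (i, i') (ltac:(by apply/eqP)).
    apply: hd2 => /=.
    set vv := absz (d - ((- (2 * H)%N%:Z + (nat_of_ord u)%:Z) - E%:Z))%R.
    have hvv : (vv < L)%N by rewrite /vv; lia.
    have e := congr1 (fun s => nth (f i 0%R) s vv) eW.
    rewrite /= !window_nth // /= in e.
    have hd : d = ((- (2 * H)%N%:Z + (nat_of_ord u)%:Z - E%:Z) + vv%:Z)%R by rewrite /vv; lia.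
    by rewrite hd.
  by rewrite hii.
have huniq : uniq (codom W) by rewrite map_inj_uniq // enum_uniq.
have hsub : {subset codom W <= codom g}.
  move=> w /codomP [p ->].
  have [hx _] := hf p.1.
  have [a [m hin]] := hx ((- (2 * H)%N%:Z + (nat_of_ord p.2)%:Z) - E%:Z)%R L.
  apply: (hg _ a m) => //.
  by rewrite /W /window size_map size_iota.
have := uniq_leq_size huniq hsub.
rewrite !size_codom !card_prod !card_ord.
have hL5 : (L <= 5 * H)%N by rewrite /L; lia.
have hkL : (N <= k * (5 * H))%N by apply: (leq_trans hN); rewrite leq_mul2l hL5 orbT.
have : (#|A| * #|A| * N <= K * H)%N.
  rewrite /K -(mulnA _ k) -(mulnA _ (k * 5)) leq_mul2l -mulnA hkL orbT //.
move=> h1 h2.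
have : (K.+1 * H <= K * H)%N by exact: leq_trans h2 h1.
rewrite leq_mul2r; lia.
Qed.
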